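(* Let $k$ be an algebraically closed field and $\Lambda=kQ/I$ ($Q$ finite quiver, $I$ admissible) satisfy condition (C) below with vertices $1,\dots,n$ labelled so that $Q^{\circ}$ has arrows between $i$ and $i+1$. For every $\mathbf{i}=\{i_0<i_1<\cdots<i_{2m}\}\in\Xi$, the two-term complex $X_{\mathbf{i}}$ defined below is indecomposable in $K^b(\operatorname{proj}\Lambda)$.
   Context: Condition (C): (a) $Q^{\circ}$ ($Q$ with loops deleted) has vertices $1,\dots,n$ and exactly one arrow $i\to i+1$ and one arrow $i+1\to i$ for each $1\le i\le n-1$, no others; (b) for each arrow $x:i\to j$ of $Q$ with $i\ne j$, $x\Lambda e_j=e_i\Lambda e_j=e_i\Lambda x$; (c) for all vertices $i,j$, $w^i_j\neq0$ in $\Lambda$, where $w^i_j$ is the shortest path from $i$ to $j$ (paths composed left to right). $P_i=e_i\Lambda$ for $1\le i\le n$ and $P_0=P_{n+1}=0$. For vertices $i,j$, $f^j_i:P_i\to P_j$ is $e_i\lambda\mapsto w^j_i\lambda$ (zero if $P_i$ or $P_j$ is $0$). $\Xi$ is the set of subsets $\mathbf{i}=\{i_0<\cdots<i_{2m}\}\subseteq\{0,\dots,n+1\}$, $m\ge0$, with $\mathbf{i}\ne\{0\},\{n+1\}$. $X_{\mathbf{i}}$ is the complex with $X^{-1}_{\mathbf{i}}=\bigoplus_{t=0}^{m}P_{i_{2t}}$ in degree $-1$, $X^0_{\mathbf{i}}=\bigoplus_{t=1}^{m}P_{i_{2t-1}}$ in degree $0$, and differential whose only nonzero components are $f^{i_{2t+1}}_{i_{2t}}:P_{i_{2t}}\to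 P_{i_{2t+1}}$ ($0\le t\le m-1$) and $f^{i_{2t-1}}_{i_{2t}}:P_{i_{2t}}\to P_{i_{2t-1}}$ ($1\le t\le m$). *)

(* Defs.v *)
From HB Require Import structures.
From mathcomp Require Import all_boot all_order all_algebra all_field.
Set Implicit Arguments. Unset Strict Implicit. Unset Printing Implicit Defensive.
Import GRing.Theory.
Local Open Scope ring_scope.

Section BoundQuiver.
Variables (k : fieldType) (A : falgType k) (n : nat) (Arr : finType)
  (src tgt : Arr -> nat) (e : nat -> A) (a : Arr -> A).

Definition vtx (i : nat) : bool := (1 <= i <= n)%N.

(* e_i extended by 0 outside 1..n, so that P_0 = P_{n+1} = 0 Λ = 0 *)
Definition ev (i : nat) : A := if vtx i then e i else 0.

(* image in Λ of the path of arrows p (composed left to right) *)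
Definition pathv (p : seq Arr) : A := \prod_(x <- p) a x.

Definition paths_len (l : nat) : seq A :=
  [seq pathv (tval p) | p <- enum {: l.-tuple Arr}].

(* Λ = kQ/I with I admissible, where e_i, a_x are the images of the trivial
   paths and of the arrows under the (surjective) algebra map kQ -> Λ. *)
Definition bound_quiver_algebra : Prop :=
  [/\
      (forall x, vtx (src x) /\ vtx (tgt x)),
      (* relations of kQ: orthogonal idempotents summing to 1, arrows x : i -> j
         satisfy x = e_i x e_j *)
      (forall i j, vtx i -> vtx j -> e i * e j = if i == j then e i else 0),
      \sum_(1 <= i < n.+1) e i = 1,
      (forall x, a x = e (src x) * a x * e (tgt x)) &
      exists N : nat, [/\ (2 <= N)%N,
        (* surjectivity of kQ -> Λ : Λ is spanned by (images of) paths *)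
        (fullv <= <<[seq e i | i <- iota 1 n] ++ flatten [seq paths_len l | l <- iota 1 N]>>)%VS,
        (* R^N ⊆ I *)
        (forall p : N.-tuple Arr, pathv p = 0) &
        (* I ⊆ R^2 : no nonzero combination of trivial paths and arrows
           lies in I + R^2 *)
        (forall (c : nat -> k) (d : Arr -> k),
           (\sum_(1 <= i < n.+1) c i *: e i + \sum_x d x *: a x
              \in <<flatten [seq paths_len l | l <- iota 2 (N - 2)]>>%VS) ->
           (forall i, vtx i -> c i = 0) /\ (forall x, d x = 0))]].

Definition arr (i j : nat) : A :=
  odflt 0 (omap a [pick x | (src x == i) && (tgt x == j)]).

Definition wpath (i j : nat) : A :=
  if (i <= j)%N then ev i * \prod_(0 <= r < j - i) arr (i + r) (i + r).+1
  else ev i * \prod_(0 <= r < i - j) arr (i - r) (i - r).-1.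

(* f^j_i : P_i -> P_j, given by left multiplication by w^j_i ∈ e_j Λ e_i *)
Definition fmap (j i : nat) : A := ev j * wpath j i * ev i.

Definition condC : Prop :=
  [/\
      (forall x, src x <> tgt x ->
          tgt x = (src x).+1 \/ src x = (tgt x).+1),
      (forall i, (1 <= i < n)%N ->
          #|[pred x | (src x == i) && (tgt x == i.+1)]| = 1%N /\
          #|[pred x | (src x == i.+1) && (tgt x == i)]| = 1%N),
      (forall x, src x <> tgt x -> forall y : A,
         ((exists l, y = a x * l * e (tgt x)) <-> (exists l, y = e (src x) * l * e (tgt x))) /\
         ((exists l, y = e (src x) * l * e (tgt x)) <-> (exists l, y = e (src x) * l * a x))) &
      (forall i j, vtx i -> vtx j -> wpath i j != 0)].

(* A Λ-linear map ⊕_s P_{u s} -> ⊕_r P_{v r} is a matrix M with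
   M r s ∈ e_{v r} Λ e_{u s}, acting by left multiplication;
   composition is the matrix product. *)
Definition hommx (p q : nat) (v : 'I_p -> nat) (u : 'I_q -> nat) (M : 'M[A]_(p, q)) :=
  forall r s, M r s = ev (v r) * M r s * ev (u s).

Definition idmx (q : nat) (u : 'I_q -> nat) : 'M[A]_q :=
  \matrix_(r, s) (if r == s then ev (u r) else 0).

(* complex X : degree -1 = ⊕_s P_{u s}, degree 0 = ⊕_r P_{v r}, differential D *)
Definition chain_endo (p q : nat) (v : 'I_p -> nat) (u : 'I_q -> nat)
  (D : 'M[A]_(p, q)) (F1 : 'M[A]_q) (F0 : 'M[A]_p) : Prop :=
  [/\ hommx u u F1, hommx v v F0 & D *m F1 = F0 *m D].

Definition null_homotopic (p q : nat) (v : 'I_p -> nat) (u : 'I_q -> nat)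
  (D : 'M[A]_(p, q)) (F1 : 'M[A]_q) (F0 : 'M[A]_p) : Prop :=
  exists H : 'M[A]_(q, p), [/\ hommx u v H, F1 = H *m D & F0 = D *m H].

(* indecomposable in K^b(proj Λ): X is nonzero in the homotopy category and
   End_{K^b}(X) has no idempotents other than 0 and 1. *)
Definition indecomposableK (p q : nat) (v : 'I_p -> nat) (u : 'I_q -> nat)
  (D : 'M[A]_(p, q)) : Prop :=
  hommx v u D /\
  ~ null_homotopic v u D (idmx u) (idmx v) /\
  forall F1 F0, chain_endo v u D F1 F0 ->
    null_homotopic v u D (F1 *m F1 - F1) (F0 *m F0 - F0) ->
    null_homotopic v u D F1 F0 \/
    null_homotopic v u D (F1 - idmx u) (F0 - idmx v).

End BoundQuiver.

(* Ξ : subsets {i_0 < ... < i_{2m}} of {0,...,n+1}, given as increasing lists *)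
Definition inXi (n : nat) (ii : seq nat) : bool :=
  [&& sorted ltn ii, all (fun i => i <= n.+1)%N ii, odd (size ii),
      ii != [:: 0%N] & ii != [:: n.+1]].

Definition mXi (ii : seq nat) : nat := (size ii)./2.

(* degree -1 : P_{i_{2t}}, t = 0..m ; degree 0 : P_{i_{2t+1}}, t = 0..m-1 *)
Definition Xi_deg1 (ii : seq nat) (s : 'I_(mXi ii).+1) : nat := nth 0%N ii (2 * s).
Definition Xi_deg0 (ii : seq nat) (r : 'I_(mXi ii)) : nat := nth 0%N ii (2 * r).+1.

Definition Xi_diff (k : fieldType) (A : falgType k) (n : nat) (Arr : finType)
  (src tgt : Arr -> nat) (e : nat -> A) (a : Arr -> A) (ii : seq nat)
  : 'M[A]_(mXi ii, (mXi ii).+1) :=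
  \matrix_(r, s)
    (if (s : nat) == r then fmap n src tgt e a (Xi_deg0 r) (Xi_deg1 s)
     else if (s : nat) == r.+1 then fmap n src tgt e a (Xi_deg0 r) (Xi_deg1 s)
     else 0).

(* Main.v *)
Require Import Defs.
From HB Require Import structures.
From mathcomp Require Import all_boot all_order all_algebra all_field.
From mathcomp Require Import zify.
Set Implicit Arguments. Unset Strict Implicit. Unset Printing Implicit Defensive.
Import GRing.Theory.
Local Open Scope ring_scope.

Lemma span_ind (K : fieldType) (vT : vectType K) (X : seq vT) (Pr : vT -> Prop) :
  Pr 0 -> (forall u v, Pr u -> Pr v -> Pr (u + v)) ->
  (forall c u, Pr u -> Pr (c *: u)) -> (forall g, g \in X -> Pr g) ->
  forall v, v \in <<X>>%VS -> Pr v.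
Proof.
move=> P0 PD PZ PX v /(@coord_span _ _ _ (in_tuple X)) ->.
elim/big_ind: _ => // i _; apply: PZ; apply: PX; exact: mem_nth.
Qed.

Section Alg.
Variables (k : fieldType) (A : falgType k) (n : nat) (Arr : finType)
  (src tgt : Arr -> nat) (e : nat -> A) (a : Arr -> A).
Hypothesis Hvtx : forall x, vtx n (src x) /\ vtx n (tgt x).
Hypothesis Horth : forall i j, vtx n i -> vtx n j -> e i * e j = if i == j then e i else 0.
Hypothesis Hsum : \sum_(1 <= i < n.+1) e i = 1.
Hypothesis Harr : forall x, a x = e (src x) * a x * e (tgt x).
Variable N : nat.
Hypothesis HN : (2 <= N)%N.
Hypothesis Hspan : (fullv <= <<[seq e i | i <- iota 1 n] ++ flatten [seq paths_len a l | l <- iota 1 N]>>)%VS.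
Hypothesis Hzero : forall p : N.-tuple Arr, pathv a p = 0.

Local Notation ev := (ev n e).
Local Notation vtx := (vtx n).

Lemma evE i : vtx i -> ev i = e i. Proof. by rewrite /ev => ->. Qed.
Lemma evN i : ~~ vtx i -> ev i = 0. Proof. by rewrite /ev => /negbTE ->. Qed.
Lemma ee i : vtx i -> e i * e i = e i. Proof. by move=> v; rewrite Horth // eqxx. Qed.
Lemma eeN i j : vtx i -> vtx j -> i != j -> e i * e j = 0.
Proof. by move=> vi vj ij; rewrite Horth // (negbTE ij). Qed.
Lemma evev i : ev i * ev i = ev i.
Proof. by rewrite /ev; case: ifP => [/ee//|]; rewrite mulr0. Qed.
Lemma evevN i j : i != j -> ev i * ev j = 0.
Proof. by rewrite /ev; case: ifP => vi; case: ifP => vj // ij; rewrite ?mulr0 ?mul0r // eeN. Qed.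

Lemma e_al j x : vtx j -> e j * a x = if j == src x then a x else 0.
Proof.
move=> vj; rewrite {1}Harr !mulrA Horth //; last by case: (Hvtx x).
case: (eqVneq j (src x)) => [->|ne]; first by rewrite ?eqxx -?Harr.
by rewrite !mul0r.
Qed.
Lemma e_ar j x : vtx j -> a x * e j = if j == tgt x then a x else 0.
Proof.
move=> vj; rewrite {1}Harr -!mulrA Horth //; last by case: (Hvtx x).
rewrite [j == _]eq_sym; case: (eqVneq (tgt x) j) => [E|ne]; first by rewrite !mulrA -?Harr.
by rewrite !mulr0.
Qed.

Lemma pathv_nil : pathv a [::] = 1. Proof. by rewrite /pathv big_nil. Qed.
Lemma pathv_cons x p : pathv a (x :: p) = a x * pathv a p.
Proof. by rewrite /pathv big_cons. Qed.
Lemma pathv_cat p q : pathv a (p ++ q) = pathv a p * pathv a q.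
Proof. by rewrite /pathv big_cat. Qed.

Lemma path_big (p : seq Arr) : (N <= size p)%N -> pathv a p = 0.
Proof.
move=> hp; rewrite -(cat_take_drop N p) pathv_cat.
have sz : size (take N p) == N by rewrite size_takel.
by have := Hzero (Tuple sz) => /= ->; rewrite mul0r.
Qed.

Lemma mem_paths_len (p : seq Arr) : pathv a p \in paths_len a (size p).
Proof.
rewrite /paths_len; apply/mapP; exists (in_tuple p) => //; by rewrite mem_enum.
Qed.

Lemma paths_lenP l g : g \in paths_len a l -> exists p : seq Arr, size p = l /\ g = pathv a p.
Proof. by case/mapP => t _ ->; exists (tval t); rewrite size_tuple. Qed.

Definition plist (m : nat) := flatten [seq paths_len a l | l <- iota m N].
Definition P (m : nat) := <<plist m>>%VS.

Lemma plistP m g : g \in plist m -> exists p : seq Arr, (m <= size p < m + N)%N /\ g = pathv a p.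
Proof.
case/flattenP => s /mapP [l]; rewrite mem_iota => hl -> /paths_lenP [p [sp ->]].
by exists p; rewrite sp.
Qed.

Lemma path_P m (p : seq Arr) : (m <= size p)%N -> pathv a p \in P m.
Proof.
move=> hm; case: (ltnP (size p) N) => hN; last by rewrite path_big // mem0v.
apply: memv_span; apply/flattenP; exists (paths_len a (size p)); last exact: mem_paths_len.
by apply/mapP; exists (size p) => //; rewrite mem_iota hm /=; lia.
Qed.

Lemma P_ind m (Pr : A -> Prop) :
  Pr 0 -> (forall u v, Pr u -> Pr v -> Pr (u + v)) ->
  (forall c u, Pr u -> Pr (c *: u)) -> (forall p : seq Arr, (m <= size p)%N -> Pr (pathv a p)) ->
  forall v, v \in P m -> Pr v.
Proof.
move=> P0 PD PZ Pp; apply: span_ind => // g /plistP [p [/andP [h1 _] ->]]; exact: Pp.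
Qed.

Lemma P_mono m m' v : (m <= m')%N -> v \in P m' -> v \in P m.
Proof.
move=> hm hv; apply: (P_ind (m:=m') (Pr := fun v => v \in P m)) hv => [|u w|c u|p hp]; rewrite ?mem0v //.
- exact: memvD.
- exact: memvZ.
- apply: path_P; lia.
Qed.

Lemma P_mul i j u v : u \in P i -> v \in P j -> u * v \in P (i + j).
Proof.
move=> hu hv; move: u hu.
apply: (P_ind (Pr := fun u => u * v \in P (i + j))) => [|u w hu hw|c u hu|p hp]; rewrite ?mul0r ?mem0v ?mulrDl -?scalerAl //.
- exact: memvD.
- exact: memvZ.
move: v hv; apply: (P_ind (Pr := fun v => pathv a p * v \in P (i + j))) => [|u w hu hw|c u hu|q hq]; rewrite ?mulr0 ?mem0v ?mulrDr -?scalerAr //.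
- exact: memvD.
- exact: memvZ.
by rewrite -pathv_cat; apply: path_P; rewrite size_cat; lia.
Qed.

Lemma P_N m v : (N <= m)%N -> v \in P m -> v = 0.
Proof.
move=> hm; apply: (P_ind (Pr := fun v => v = 0)) => [|u w -> ->|c u ->|p hp]; rewrite ?addr0 ?scaler0 //.
apply: path_big; lia.
Qed.

Lemma eP_l j m v : vtx j -> (1 <= m)%N -> v \in P m -> e j * v \in P m.
Proof.
move=> vj hm; apply: (P_ind (Pr := fun v => e j * v \in P m)) => [|u w hu hw|c u hu|p hp]; rewrite ?mulr0 ?mem0v ?mulrDr -?scalerAr //.
- exact: memvD.
- exact: memvZ.
case: p hp => [|x p] hp; first by rewrite /= in hp; lia.
rewrite pathv_cons mulrA e_al //; case: ifP => _; last by rewrite mul0r mem0v.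
by rewrite -pathv_cons path_P.
Qed.

Lemma eP_r j m v : vtx j -> (1 <= m)%N -> v \in P m -> v * e j \in P m.
Proof.
move=> vj hm; apply: (P_ind (Pr := fun v => v * e j \in P m)) => [|u w hu hw|c u hu|p hp]; rewrite ?mul0r ?mem0v ?mulrDl -?scalerAl //.
- exact: memvD.
- exact: memvZ.
case/lastP: p hp => [|p x] hp; first by rewrite /= in hp; lia.
rewrite -cats1 pathv_cat pathv_cons pathv_nil mulr1 -mulrA e_ar //; case: ifP => _; last by rewrite mulr0 mem0v.
have -> : pathv a p * a x = pathv a (rcons p x) by rewrite -cats1 pathv_cat pathv_cons pathv_nil mulr1.
exact: path_P.
Qed.

Lemma span_all (Pr : A -> Prop) :
  Pr 0 -> (forall u v, Pr u -> Pr v -> Pr (u + v)) ->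
  (forall c u, Pr u -> Pr (c *: u)) -> (forall j, vtx j -> Pr (e j)) ->
  (forall v, v \in P 1 -> Pr v) -> forall v, Pr v.
Proof.
move=> P0 PD PZ Pe PP v.
have: v \in <<[seq e i | i <- iota 1 n] ++ flatten [seq paths_len a l | l <- iota 1 N]>>%VS.
  by apply: (subvP Hspan); rewrite memvf.
apply: span_ind => // g; rewrite mem_cat => /orP [/mapP [j] | hg].
  by rewrite mem_iota => hj ->; apply: Pe; rewrite /Defs.vtx; lia.
by apply: PP; apply: memv_span.
Qed.

Lemma ideal_l m u v : (1 <= m)%N -> v \in P m -> u * v \in P m.
Proof.
move=> hm hv; move: u; apply: (span_all (Pr := fun u => u * v \in P m)) => [|u w hu hw|c u hu|j vj|u hu]; rewrite ?mul0r ?mem0v ?mulrDl -?scalerAl //.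
- exact: memvD.
- exact: memvZ.
- exact: eP_l.
- apply: (P_mono (m' := 1 + m)); [lia | exact: P_mul].
Qed.

Lemma ideal_r m u v : (1 <= m)%N -> v \in P m -> v * u \in P m.
Proof.
move=> hm hv; move: u; apply: (span_all (Pr := fun u => v * u \in P m)) => [|u w hu hw|c u hu|j vj|u hu]; rewrite ?mulr0 ?mem0v ?mulrDr -?scalerAr //.
- exact: memvD.
- exact: memvZ.
- exact: eP_r.
- apply: (P_mono (m' := m + 1)); [lia | exact: P_mul].
Qed.


Lemma diagP j v : vtx j -> exists c, e j * v * e j - c *: e j \in P 1.
Proof.
move=> vj; move: v; apply: (span_all (Pr := fun v => exists c, e j * v * e j - c *: e j \in P 1)).
- by exists 0; rewrite mulr0 mul0r scale0r subr0 mem0v.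
- move=> u w [c hc] [d hd]; exists (c + d).
  by rewrite mulrDr mulrDl scalerDl opprD addrACA memvD.
- move=> d u [c hc]; exists (d * c).
  by rewrite -scalerAr -scalerAl -scalerA -scalerBr memvZ.
- move=> l vl; case: (eqVneq l j) => [->|ne].
    by exists 1; rewrite !ee // scale1r subrr mem0v.
  by exists 0; rewrite (eeN vj vl) 1?eq_sym // mul0r scale0r subr0 mem0v.
- move=> u hu; exists 0; rewrite scale0r subr0; apply: eP_r => //; exact: eP_l.
Qed.

Lemma offP i j v : vtx i -> vtx j -> i != j -> e i * v * e j \in P 1.
Proof.
move=> vi vj ij; move: v; apply: (span_all (Pr := fun v => e i * v * e j \in P 1)).
- by rewrite mulr0 mul0r mem0v.
- by move=> u w hu hw; rewrite mulrDr mulrDl memvD.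
- by move=> d u hu; rewrite -scalerAr -scalerAl memvZ.
- move=> l vl; case: (eqVneq l i) => [->|ne].
    by rewrite ee // eeN // mem0v.
  by rewrite (eeN vi vl) 1?eq_sym // mul0r mem0v.
- move=> u hu; apply: eP_r => //; exact: eP_l.
Qed.

Lemma nil_lem W c r q : W \in P 1 -> W != 0 -> r \in P 1 -> q \in P 1 ->
  c *: W = r * W + W * q -> c = 0.
Proof.
move=> hW nW hr hq hE; apply/eqP; apply: contraNT nW => nc; apply/eqP.
have WE : W = c^-1 *: (r * W + W * q) by rewrite -hE scalerA mulVf // scale1r.
suff H : forall m, W \in P m.+1 by apply: (P_N (m := N)) => //; case: N HN (H N.-1) => [|N'] //.
elim=> [//|m IH]; rewrite WE; apply: memvZ; apply: memvD.
- by apply: (P_mono (m' := 1 + m.+1)) => //; exact: P_mul.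
- by apply: (P_mono (m' := m.+1 + 1)); [lia | exact: P_mul].
Qed.

Lemma e_notP j : vtx j -> e j != 0 -> e j \notin P 1.
Proof.
move=> vj nj; apply/negP => hj.
have := @nil_lem (e j) 1 (e j) 0 hj nj hj (mem0v _).
by rewrite mulr0 addr0 scale1r ee // => /(_ erefl) /eqP; rewrite oner_eq0.
Qed.

Lemma scal_uniq j v c d : vtx j -> e j != 0 -> v - c *: e j \in P 1 -> v - d *: e j \in P 1 -> c = d.
Proof.
move=> vj nj hc hd; apply/eqP; rewrite -subr_eq0; apply/eqP.
have : (d - c) *: e j \in P 1.
  by rewrite scalerBl; move: (memvB hc hd); rewrite opprB addrC addrA subrK.
case: (eqVneq (c - d) 0) => // ne.
move=> /(memvZ (d - c)^-1); rewrite scalerA mulVf ?scale1r; first by move/(negP (e_notP vj nj)).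
by rewrite -opprB oppr_eq0.
Qed.


Local Notation W := (wpath n src tgt e a).
Local Notation ar := (arr src tgt a).

Lemma arr_e i j : vtx i -> vtx j -> e i * ar i j = ar i j /\ ar i j * e j = ar i j.
Proof.
move=> vi vj; rewrite /arr; case: pickP => [y /andP [/eqP si /eqP tj]|_] /=; last by rewrite mulr0 mul0r.
by rewrite Harr si tj !mulrA ee // -!mulrA ee.
Qed.

Lemma w_refl x : W x x = ev x.
Proof. by rewrite /wpath leqnn subnn big_geq // mulr1. Qed.

Lemma w_upE x z : (x <= z)%N -> W x z = ev x * \prod_(0 <= r < z - x) ar (x + r) (x + r).+1.
Proof. by rewrite /wpath => ->. Qed.

Lemma w_downE x z : (z <= x)%N -> W x z = ev x * \prod_(0 <= r < x - z) ar (x - r) (x - r).-1.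
Proof.
rewrite /wpath; case: ifP => // xz zx; have -> : x = z by apply/eqP; rewrite eqn_leq xz zx.
by rewrite subnn !big_geq.
Qed.

Lemma w_up x z : vtx x -> vtx x.+1 -> (x < z)%N -> W x z = ar x x.+1 * W x.+1 z.
Proof.
move=> vx vx1 xz; rewrite w_upE ?(ltnW xz) // w_upE //.
have -> : (z - x = (z - x.+1).+1)%N by lia.
rewrite big_nat_recl // addn0 !evE // mulrA (proj1 (arr_e vx vx1)).
case: (arr_e vx vx1) => _ h; rewrite -{1}h -mulrA; congr (_ * (_ * _)).
by apply: eq_bigr => r _; rewrite addnS addSn.
Qed.

Lemma w_down x z : vtx x -> vtx x.-1 -> (z < x)%N -> W x z = ar x x.-1 * W x.-1 z.
Proof.
move=> vx vx1 xz; rewrite w_downE ?(ltnW xz) // w_downE; last by lia.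
have -> : (x - z = (x.-1 - z).+1)%N by lia.
rewrite big_nat_recl // subn0 !evE // mulrA (proj1 (arr_e vx vx1)).
case: (arr_e vx vx1) => _ h; rewrite -{1}h -mulrA; congr (_ * (_ * _)).
apply: eq_bigr => r _; have -> : (x - r.+1 = x.-1 - r)%N by lia. by [].
Qed.

Lemma vtx_between x y z : vtx x -> vtx z -> (x <= y <= z)%N \/ (z <= y <= x)%N -> vtx y.
Proof. rewrite /Defs.vtx; lia. Qed.

Lemma comp_up x y z : vtx x -> vtx z -> (x <= y <= z)%N -> W x y * W y z = W x z.
Proof.
move=> vx vz /andP [xy yz]; move Hd : (y - x)%N => d.
elim: d x vx xy Hd => [|d IH] x vx xy Hd.
  have -> : y = x by lia.
  by rewrite w_refl w_upE ?mulrA ?evev //; lia.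
have vx1 : vtx x.+1 by apply: (vtx_between vx vz); lia.
rewrite (w_up vx vx1); last by lia.
rewrite (w_up vx vx1 (z := z)); last by lia.
by rewrite -mulrA IH //; lia.
Qed.

Lemma comp_down x y z : vtx x -> vtx z -> (z <= y <= x)%N -> W x y * W y z = W x z.
Proof.
move=> vx vz /andP [zy yx]; move Hd : (x - y)%N => d.
elim: d x vx yx Hd => [|d IH] x vx yx Hd.
  have -> : y = x by lia.
  by rewrite w_refl w_downE ?mulrA ?evev //; lia.
have vx1 : vtx x.-1 by apply: (vtx_between vx vz); lia.
rewrite (w_down vx vx1); last by lia.
rewrite (w_down vx vx1 (z := z)); last by lia.
by rewrite -mulrA IH //; lia.
Qed.

Lemma w_endl x z : e x * W x z = W x z.
Proof.
have h : e x * ev x = ev x by rewrite /Defs.ev; case: ifP => vx; rewrite ?ee ?mulr0.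
by rewrite /wpath; case: ifP => _; rewrite mulrA h.
Qed.

Lemma w_endr x z : vtx x -> vtx z -> W x z * e z = W x z.
Proof.
move=> vx vz; rewrite -(evE vz) -w_refl.
case: (leqP x z) => h; [apply: comp_up | apply: comp_down] => //; lia.
Qed.

Lemma fmapE x z : vtx x -> vtx z -> fmap n src tgt e a x z = W x z.
Proof. by move=> vx vz; rewrite /fmap !evE // w_endl w_endr. Qed.

Lemma w_P1 x z : vtx x -> vtx z -> x != z -> W x z \in P 1.
Proof.
move=> vx vz xz; have <- : e x * W x z * e z = W x z by rewrite w_endl w_endr.
exact: offP.
Qed.


Definition EP (Q : pred nat) := \sum_(1 <= i < n.+1 | Q i) e i.

Lemma sum_delta (F : nat -> A) j : vtx j ->
  \sum_(1 <= i < n.+1) (if i == j then F i else 0) = F j.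
Proof.
move=> vj; rewrite (bigD1_seq j) /=; first last.
- exact: iota_uniq.
- by rewrite mem_iota; move: vj; rewrite /Defs.vtx; lia.
by rewrite eqxx big1 ?addr0 // => i /negbTE ->.
Qed.

Lemma EP_er Q j : vtx j -> e j * EP Q = if Q j then e j else 0.
Proof.
move=> vj; rewrite /EP mulr_sumr big_mkcond /=.
rewrite (eq_big_nat _ _ (F2 := fun i => if i == j then (if Q i then e i else 0) else 0)).
  by rewrite sum_delta.
move=> i hi; have vi : vtx i by rewrite /Defs.vtx; lia.
case: (eqVneq i j) => [->|ne]; first by case: (Q j); rewrite ?ee ?mulr0.
by case: (Q i); rewrite ?eeN // eq_sym.
Qed.

Lemma EP_el Q j : vtx j -> EP Q * e j = if Q j then e j else 0.
Proof.
move=> vj; rewrite /EP mulr_suml big_mkcond /=.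
rewrite (eq_big_nat _ _ (F2 := fun i => if i == j then (if Q i then e i else 0) else 0)).
  by rewrite sum_delta.
move=> i hi; have vi : vtx i by rewrite /Defs.vtx; lia.
case: (eqVneq i j) => [->|ne]; first by case: (Q j); rewrite ?ee ?mul0r.
by case: (Q i); rewrite ?eeN.
Qed.

Lemma EP_split Q : EP Q + EP (predC Q) = 1.
Proof. by rewrite /EP -Hsum [RHS](bigID Q) /=. Qed.

Lemma EP_orth Q : EP Q * EP (predC Q) = 0.
Proof.
rewrite {1}/EP mulr_suml big_nat_cond big1 // => i /andP [hi Qi].
rewrite EP_er /=; first by rewrite Qi.
by rewrite /Defs.vtx; lia.
Qed.

Lemma EP_al Q y : EP Q * a y = if Q (src y) then a y else 0.
Proof.
case: (Hvtx y) => vs vt; rewrite Harr !mulrA EP_el //.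
by case: (Q (src y)); rewrite -?Harr ?mul0r.
Qed.

Lemma EP_ar Q y : a y * EP Q = if Q (tgt y) then a y else 0.
Proof.
case: (Hvtx y) => vs vt; rewrite Harr -!mulrA EP_er //.
by case: (Q (tgt y)); rewrite ?mulrA -?Harr ?mulr0.
Qed.

Hypothesis Hb : forall x, src x <> tgt x -> forall y : A,
         ((exists l, y = a x * l * e (tgt x)) <-> (exists l, y = e (src x) * l * e (tgt x))) /\
         ((exists l, y = e (src x) * l * e (tgt x)) <-> (exists l, y = e (src x) * l * a x)).

Section Step.
Variables (S : pred nat) (x0 : Arr).
Hypothesis Sx : S (src x0).
Hypothesis x0ne : src x0 <> tgt x0.
Hypothesis huniq : forall y, S (src y) -> ~~ S (tgt y) -> y = x0.

Lemma step_path (p : seq Arr) : forall l,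
  exists mu, e (src x0) * l * EP S * pathv a p * EP (predC S) = a x0 * mu.
Proof.
elim: p => [|y p IH] l.
  by exists 0; rewrite pathv_nil mulr1 -mulrA EP_orth !mulr0.
have -> : e (src x0) * l * EP S * pathv a (y :: p) * EP (predC S) =
   e (src x0) * (l * EP S * a y) * EP S * pathv a p * EP (predC S) +
   e (src x0) * l * EP S * a y * EP (predC S) * pathv a p * EP (predC S).
  rewrite pathv_cons -{1}(mulr1 (a y)) -(EP_split S) !mulrA.
  by rewrite mulrDr !mulrDl.
have [mu1 h1] := IH (l * EP S * a y).
rewrite h1.
have E : e (src x0) * l * EP S * a y * EP (predC S) =
   if S (src y) && ~~ S (tgt y) then e (src x0) * l * EP S * a y else 0.
  rewrite -mulrA EP_ar /=; case: (S (tgt y)) => /=; last first.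
    by rewrite andbT; case: ifP => // nS; rewrite -mulrA EP_al nS mulr0.
  by rewrite andbF mulr0.
rewrite E; case: ifP => [/andP [s1 s2]|_]; last by exists mu1; rewrite mul0r mul0r addr0.
have yx : y = x0 by exact: huniq.
subst y.
have [l' hl'] : exists l', e (src x0) * (l * EP S) * a x0 = a x0 * l' * e (tgt x0).
  apply/(proj1 (Hb x0ne _)); exists (l * EP S * a x0).
  have ht : a x0 * e (tgt x0) = a x0 by rewrite e_ar ?eqxx //; case: (Hvtx x0).
  by rewrite -!mulrA ht.
exists (mu1 + l' * e (tgt x0) * pathv a p * EP (predC S)).
rewrite mulrDr; congr (_ + _); by rewrite -(mulrA (e _) l) hl' -!mulrA.
Qed.

Lemma step_gen lam z : vtx z -> ~~ S z -> exists mu, e (src x0) * lam * e z = a x0 * mu.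
Proof.
move=> vz nSz; have vx : vtx (src x0) by case: (Hvtx x0).
move: lam; apply: (span_all (Pr := fun lam => exists mu, e (src x0) * lam * e z = a x0 * mu)).
- by exists 0; rewrite !mulr0 !mul0r ?mulr0.
- by move=> u w [m1 h1] [m2 h2]; exists (m1 + m2); rewrite mulrDr mulrDl h1 h2 mulrDr.
- by move=> c u [m1 h1]; exists (c *: m1); rewrite -scalerAr -scalerAl h1 scalerAr.
- move=> j vj; exists 0; rewrite mulr0; case: (eqVneq (src x0) j) => [<-|ne].
    rewrite ee // eeN //; apply/eqP => E; by move: nSz; rewrite -E Sx.
  by rewrite eeN // mul0r.
- move=> v; apply: (P_ind (Pr := fun v => exists mu, e (src x0) * v * e z = a x0 * mu)).
  + by exists 0; rewrite !mulr0 !mul0r ?mulr0.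
  + by move=> u w [m1 h1] [m2 h2]; exists (m1 + m2); rewrite mulrDr mulrDl h1 h2 mulrDr.
  + by move=> c u [m1 h1]; exists (c *: m1); rewrite -scalerAr -scalerAl h1 scalerAr.
  move=> p _; have [mu hmu] := step_path p 1.
  exists (mu * e z).
  have E1 : e (src x0) * 1 * EP S = e (src x0) by rewrite mulr1 EP_er // Sx.
  have E2 : EP (predC S) * e z = e z by rewrite EP_el //= nSz.
  rewrite -E1 -[in X in X = _]E2 !mulrA hmu; by rewrite -mulrA.
Qed.
End Step.

Hypothesis Hadj : forall x, src x <> tgt x -> tgt x = (src x).+1 \/ src x = (tgt x).+1.
Hypothesis Hcard : forall i, (1 <= i < n)%N ->
  #|[pred x | (src x == i) && (tgt x == i.+1)]| = 1%N /\
  #|[pred x | (src x == i.+1) && (tgt x == i)]| = 1%N.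

Lemma uniq_arrow i j : #|[pred x | (src x == i) && (tgt x == j)]| = 1%N ->
  exists x0, [/\ src x0 = i, tgt x0 = j, ar i j = a x0 &
     forall y, src y = i -> tgt y = j -> y = x0].
Proof.
move=> /eqP /card1P [x1 hx1].
have px1 : (src x1 == i) && (tgt x1 == j) by have := hx1 x1; rewrite !inE eqxx => ->.
have uq : forall y, src y = i -> tgt y = j -> y = x1.
  move=> y sy ty; have := hx1 y; rewrite !inE sy ty !eqxx /= => /esym /eqP //.
case/andP: px1 => /eqP s1 /eqP t1; exists x1; split => //.
rewrite /arr; case: pickP => [y /andP [/eqP sy /eqP ty]|none] /=; first by rewrite (uq y).
by have := none x1; rewrite s1 t1 !eqxx.
Qed.

Lemma step_up x lam z : (1 <= x < z)%N -> (z <= n)%N -> exists mu, e x * lam * e z = ar x x.+1 * mu.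
Proof.
move=> hx hz; have [h _] := Hcard (i := x) (ltac:(lia)).
have [x0 [s0 t0 a0 u0]] := uniq_arrow h.
rewrite a0 -{1}s0; apply: (@step_gen (fun i => i <= x)%N x0); rewrite ?s0 ?t0 /=; try lia.
- move=> y /= sy ty; have ne : src y <> tgt y by lia.
  case: (Hadj ne) => h1; last by lia.
  by apply: u0; lia.
all: try by rewrite /Defs.vtx; lia.
Qed.

Lemma step_down x lam z : (1 <= z < x)%N -> (x <= n)%N -> exists mu, e x * lam * e z = ar x x.-1 * mu.
Proof.
move=> hx hz; have [_ h] := Hcard (i := x.-1) (ltac:(lia)).
have E : x.-1.+1 = x by lia.
rewrite E in h.
have [x0 [s0 t0 a0 u0]] := uniq_arrow h.
rewrite a0 -{1}s0; apply: (@step_gen (fun i => x <= i)%N x0); rewrite ?s0 ?t0 /=; try lia.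
- move=> y /= sy ty; have ne : src y <> tgt y by lia.
  case: (Hadj ne) => h1; first by lia.
  by apply: u0; lia.
all: try by rewrite /Defs.vtx; lia.
Qed.

Lemma W2 x z lam : vtx x -> vtx z -> exists mu, e x * lam * e z = W x z * mu.
Proof.
move=> vx vz; case: (ltngtP x z) => hxz; last first.
- by subst z; exists (lam * e x); rewrite w_refl evE // mulrA.
- move Hd : (x - z)%N => d; elim: d x vx hxz Hd lam => [|d IH] x vx hxz Hd lam; first by lia.
  have vx1 : vtx x.-1 by apply: (vtx_between vx vz); lia.
  have h1 : (1 <= z < x)%N by move: vz; rewrite /Defs.vtx; lia.
  have h2 : (x <= n)%N by move: vx; rewrite /Defs.vtx; lia.
  have [mu hmu] := step_down lam h1 h2.
  have [nu hnu] : exists nu, e x.-1 * mu * e z = W x.-1 z * nu.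
    case: (ltngtP x.-1 z) => h3; first by lia.
      by apply: IH => //; lia.
    by subst z; exists (mu * e x.-1); rewrite w_refl evE // mulrA.
  exists nu; rewrite (w_down vx vx1 hxz) -[RHS]mulrA -hnu.
  have <- : e x * lam * e z * e z = e x * lam * e z by rewrite -mulrA ee.
  by rewrite hmu -{1}(proj2 (arr_e vx vx1)) !mulrA.
- move Hd : (z - x)%N => d; elim: d x vx hxz Hd lam => [|d IH] x vx hxz Hd lam; first by lia.
  have vx1 : vtx x.+1 by apply: (vtx_between vx vz); lia.
  have h1 : (1 <= x < z)%N by move: vx; rewrite /Defs.vtx; lia.
  have h2 : (z <= n)%N by move: vz; rewrite /Defs.vtx; lia.
  have [mu hmu] := step_up lam h1 h2.
  have [nu hnu] : exists nu, e x.+1 * mu * e z = W x.+1 z * nu.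
    case: (ltngtP x.+1 z) => h3; first by apply: IH => //; lia.
      by lia.
    by subst z; exists (mu * e x.+1); rewrite w_refl evE // mulrA.
  exists nu; rewrite (w_up vx vx1 hxz) -[RHS]mulrA -hnu.
  have <- : e x * lam * e z * e z = e x * lam * e z by rewrite -mulrA ee.
  by rewrite hmu -{1}(proj2 (arr_e vx vx1)) !mulrA.
Qed.

Section Mx.
Variables (p q : nat) (v : 'I_p -> nat) (u : 'I_q -> nat) (D : 'M[A]_(p, q)).

Local Notation hom := (hommx n e).
Local Notation nh := (null_homotopic n e v u D).
Local Notation ce := (chain_endo n e v u D).

Lemma homL p' q' (v' : 'I_p' -> nat) (u' : 'I_q' -> nat) M r s : hom v' u' M -> ev (v' r) * M r s = M r s.
Proof. by move=> h; rewrite (h r s) !mulrA evev. Qed.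
Lemma homR p' q' (v' : 'I_p' -> nat) (u' : 'I_q' -> nat) M r s : hom v' u' M -> M r s * ev (u' s) = M r s.
Proof. by move=> h; rewrite (h r s) -!mulrA evev. Qed.

Lemma hom_mul p' q' r' (v' : 'I_p' -> nat) (w' : 'I_q' -> nat) (u' : 'I_r' -> nat) M M' :
  hom v' w' M -> hom w' u' M' -> hom v' u' (M *m M').
Proof.
move=> h h' r s; rewrite !mxE mulr_sumr mulr_suml; apply: eq_bigr => j _.
by rewrite mulrA (homL _ _ h) -mulrA (homR _ _ h').
Qed.

Lemma hom_add p' q' (v' : 'I_p' -> nat) (u' : 'I_q' -> nat) M M' : hom v' u' M -> hom v' u' M' -> hom v' u' (M + M').
Proof. by move=> h h' r s; rewrite !mxE mulrDr mulrDl -h -h'. Qed.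
Lemma hom_opp p' q' (v' : 'I_p' -> nat) (u' : 'I_q' -> nat) M : hom v' u' M -> hom v' u' (- M).
Proof. by move=> h r s; rewrite !mxE mulrN mulNr -h. Qed.
Lemma hom_id q' (u' : 'I_q' -> nat) : hom u' u' (idmx n e u').
Proof.
move=> r s; rewrite !mxE; case: eqP => [->|_]; first by rewrite !evev.
by rewrite mulr0 mul0r.
Qed.

Lemma id_mull p' q' (v' : 'I_p' -> nat) (u' : 'I_q' -> nat) M : hom v' u' M -> idmx n e v' *m M = M.
Proof.
move=> h; apply/matrixP => r s; rewrite !mxE (bigD1 r) //= big1 ?addr0.
  by rewrite mxE eqxx (homL _ _ h).
by move=> j /negbTE nj; rewrite mxE eq_sym nj mul0r.
Qed.

Lemma id_mulr p' q' (v' : 'I_p' -> nat) (u' : 'I_q' -> nat) M : hom v' u' M -> M *m idmx n e u' = M.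
Proof.
move=> h; apply/matrixP => r s; rewrite !mxE (bigD1 s) //= big1 ?addr0.
  by rewrite mxE eqxx (homR _ _ h).
by move=> j /negbTE nj; rewrite mxE nj mulr0.
Qed.

Lemma nh_add F1 F0 G1 G0 : nh F1 F0 -> nh G1 G0 -> nh (F1 + G1) (F0 + G0).
Proof.
move=> [H [hH -> ->]] [H' [hH' -> ->]]; exists (H + H'); split.
- exact: hom_add.
- by rewrite mulmxDl.
- by rewrite mulmxDr.
Qed.

Lemma nh_opp F1 F0 : nh F1 F0 -> nh (- F1) (- F0).
Proof.
move=> [H [hH -> ->]]; exists (- H); split.
- exact: hom_opp.
- by rewrite mulNmx.
- by rewrite mulmxN.
Qed.

Lemma nh_mulr F1 F0 E1 E0 : ce E1 E0 -> nh F1 F0 -> nh (F1 *m E1) (F0 *m E0).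
Proof.
move=> [h1 h0 hc] [H [hH -> ->]]; exists (H *m E0); split.
- exact: hom_mul hH h0.
- by rewrite -!mulmxA hc.
- by rewrite mulmxA.
Qed.

Lemma ce_add F1 F0 G1 G0 : ce F1 F0 -> ce G1 G0 -> ce (F1 + G1) (F0 + G0).
Proof.
move=> [a1 a0 ac] [b1 b0 bc]; split; try exact: hom_add.
by rewrite mulmxDr mulmxDl ac bc.
Qed.
Lemma ce_opp F1 F0 : ce F1 F0 -> ce (- F1) (- F0).
Proof.
move=> [a1 a0 ac]; split; try exact: hom_opp.
by rewrite mulmxN mulNmx ac.
Qed.
Lemma ce_mul F1 F0 G1 G0 : ce F1 F0 -> ce G1 G0 -> ce (F1 *m G1) (F0 *m G0).
Proof.
move=> [a1 a0 ac] [b1 b0 bc]; split; try exact: hom_mul.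
by rewrite mulmxA ac -mulmxA bc mulmxA.
Qed.
Lemma ce_id : hom v u D -> ce (idmx n e u) (idmx n e v).
Proof. by move=> hD; split; [apply: hom_id | apply: hom_id | rewrite (id_mulr hD) (id_mull hD)]. Qed.

Definition mxP p' q' (m : nat) (M : 'M[A]_(p', q')) := forall i j, M i j \in P m.

Lemma mxP_mul p' q' r' a' b' (M : 'M[A]_(p', q')) (M' : 'M[A]_(q', r')) :
  mxP a' M -> mxP b' M' -> mxP (a' + b') (M *m M').
Proof. by move=> h h' i j; rewrite mxE; apply: memv_suml => l _; apply: P_mul. Qed.

Lemma mxP_sub p' q' m (M M' : 'M[A]_(p', q')) : mxP m M -> mxP m M' -> mxP m (M - M').
Proof. by move=> h h' i j; rewrite !mxE; apply: memvB. Qed.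
Lemma mxP_opp p' q' m (M : 'M[A]_(p', q')) : mxP m M -> mxP m (- M).
Proof. by move=> h i j; rewrite !mxE memvN. Qed.

Definition itm p' (E : 'M[A]_p') (k : nat) := iter k (fun X => X *m E) E.

Lemma nil_E E1 E0 : ce E1 E0 -> mxP 1 E1 -> mxP 1 E0 ->
  nh (E1 *m E1 - E1) (E0 *m E0 - E0) -> nh E1 E0.
Proof.
move=> hce h1 h0 hid.
have H : forall t, nh (E1 - itm E1 t) (E0 - itm E0 t) /\ mxP t.+1 (itm E1 t) /\ mxP t.+1 (itm E0 t).
  elim=> [|t [IH [i1 i0]]].
    split; last by [].
    rewrite /itm /= !subrr; exists 0; split; rewrite ?mul0mx ?mulmx0 //.
    by move=> r s; rewrite !mxE mulr0 mul0r.
  split; last first.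
    split; rewrite /itm iterS -/(itm _ _) -addn1; exact: mxP_mul.
  rewrite /itm !iterS -!/(itm _ _).
  have -> : E1 - itm E1 t *m E1 = - (E1 *m E1 - E1) + (E1 - itm E1 t) *m E1.
    by rewrite mulmxBl opprB addrA subrK.
  have -> : E0 - itm E0 t *m E0 = - (E0 *m E0 - E0) + (E0 - itm E0 t) *m E0.
    by rewrite mulmxBl opprB addrA subrK.
  apply: nh_add; first exact: nh_opp.
  exact: nh_mulr.
have [hk [z1 z0]] := H N.-1.
have E1z : itm E1 N.-1 = 0.
  apply/matrixP => i j; rewrite mxE; apply: (P_N (m := N.-1.+1)) => //; lia.
have E0z : itm E0 N.-1 = 0.
  apply/matrixP => i j; rewrite mxE; apply: (P_N (m := N.-1.+1)) => //; lia.
by move: hk; rewrite E1z E0z !subr0.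
Qed.

End Mx.

Hypothesis Hc : forall i j, vtx i -> vtx j -> W i j != 0.

Lemma e_ne0 j : vtx j -> e j != 0.
Proof. by move=> vj; have := Hc vj vj; rewrite w_refl evE. Qed.

Definition Neg (Wb z : A) := exists q, q \in P 1 /\ z = Wb * q.

Lemma Neg0 Wb : Neg Wb 0. Proof. by exists 0; rewrite mem0v mulr0. Qed.
Lemma NegD Wb y z : Neg Wb y -> Neg Wb z -> Neg Wb (y + z).
Proof. by move=> [q [hq ->]] [q' [hq' ->]]; exists (q + q'); rewrite memvD // mulrDr. Qed.
Lemma NegN Wb y : Neg Wb y -> Neg Wb (- y).
Proof. by move=> [q [hq ->]]; exists (- q); rewrite memvN mulrN. Qed.
Lemma NegM Wb y l : Neg Wb y -> Neg Wb (y * l).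
Proof. by move=> [q [hq ->]]; exists (q * l); rewrite -mulrA; split => //; apply: ideal_r. Qed.

Lemma negQ bb aa r1 : vtx bb -> vtx aa -> bb != aa -> r1 \in P 1 -> Neg (W bb aa) (e bb * r1 * W bb aa).
Proof.
move=> vb va ba hr.
have [mu hmu] := W2 (r1 * W bb aa) vb va.
have h1 : e bb * r1 * W bb aa = W bb aa * mu by rewrite -hmu -!mulrA w_endr.
have hmu' : e bb * r1 * W bb aa = W bb aa * (e aa * mu * e aa).
  by rewrite !mulrA (w_endr vb va) -h1 -(mulrA (e bb * r1)) (w_endr vb va).
have [cc hc] := diagP mu va.
set q := e aa * mu * e aa - cc *: e aa.
have Eq : e bb * r1 * W bb aa = cc *: W bb aa + W bb aa * q.
  by rewrite hmu' /q mulrBr -scalerAr w_endr // addrC subrK.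
have c0 : cc = 0.
  apply: (@nil_lem (W bb aa) cc (e bb * r1) (- q)).
  - exact: w_P1.
  - exact: Hc.
  - by apply: eP_l.
  - by rewrite memvN.
  by rewrite Eq mulrN addrK.
by exists q; split => //; rewrite Eq c0 scale0r add0r.
Qed.

Lemma negA bb aa cc y : vtx bb -> vtx aa -> vtx cc ->
  (aa < bb < cc)%N \/ (cc < bb < aa)%N -> y = e cc * y * e aa -> Neg (W bb aa) (W bb cc * y).
Proof.
move=> vb va vc ord hy.
have [mu hmu] := W2 y vc va.
have Wca : W cc aa = W cc bb * W bb aa.
  by case: ord => h; [rewrite comp_down // | rewrite comp_up //]; lia.
rewrite hy hmu Wca !mulrA.
apply: NegM.
have bc : bb != cc by apply/eqP => E; subst; lia.
have ba : bb != aa by apply/eqP => E; subst; lia.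
have -> : W bb cc * W cc bb = e bb * (W bb cc * W cc bb) by rewrite mulrA w_endl.
apply: negQ => //; apply: ideal_r => //; exact: w_P1.
Qed.

Lemma negB bb aa cc z : vtx bb -> vtx aa -> vtx cc ->
  (cc < aa < bb)%N \/ (bb < aa < cc)%N -> z = e bb * z * e cc -> Neg (W bb aa) (z * W cc aa).
Proof.
move=> vb va vc ord hz.
have [mu hmu] := W2 z vb vc.
have Wbc : W bb cc = W bb aa * W aa cc.
  by case: ord => h; [rewrite comp_down // | rewrite comp_up //]; lia.
rewrite hz hmu Wbc -!mulrA; exists (W aa cc * (mu * W cc aa)); split => //.
apply: ideal_r => //; apply: w_P1 => //; apply/eqP => E; subst; lia.
Qed.

Lemma zmod_id (V : zmodType) (x y L M : V) : L - M = x + L - (y + M) - x + y.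
Proof.
rewrite [x + L]addrC -!addrA; congr (_ + _).
rewrite opprD -!addrA addrCA [x + _]addrCA addNKr addrCA addNr addr0 //.
Qed.

Lemma inP1 i j x : i != j -> x = ev i * x * ev j -> x \in P 1.
Proof.
move=> ij ->; rewrite /Defs.ev; case: ifP => vi; case: ifP => vj; rewrite ?mulr0 ?mul0r ?mem0v //.
exact: offP.
Qed.

Lemma big_neg (Wb : A) (I : finType) (Q : pred I) (F : I -> A) :
  (forall j, Q j -> Neg Wb (F j)) -> Neg Wb (\sum_(j | Q j) F j).
Proof. by move=> h; elim/big_ind: _ => //; [exact: Neg0 | exact: NegD]. Qed.

Lemma fmapNl i j : ~~ vtx j -> fmap n src tgt e a j i = 0.
Proof. by move=> h; rewrite /fmap (evN h) !mul0r. Qed.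
Lemma fmapNr i j : ~~ vtx i -> fmap n src tgt e a j i = 0.
Proof. by move=> h; rewrite /fmap (evN h) mulr0. Qed.

Lemma zmod_id2 (V : zmodType) (x s y a' b : V) : x + s - y - (a' - b) = (x - a') + s - (y - b).
Proof.
rewrite !opprB !addrA (addrAC (x + s) (- y) b) (addrAC x (-a') s) (addrAC (x + s) (-a') b).
by rewrite addrAC.
Qed.
Lemma zmod_id3 (V : zmodType) (x y z : V) : (x - y) - (y - z) - (x - y) = z - y.
Proof. by rewrite addrAC subrr add0r opprB. Qed.

Lemma sq_diag q' (w : 'I_q' -> nat) (M : 'M[A]_q') j c :
  hommx n e w w M -> (forall s t, s != t -> w s != w t) ->
  M j j - c *: ev (w j) \in P 1 -> (M *m M - M) j j - (c * c - c) *: ev (w j) \in P 1.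
Proof.
move=> hM hw hp.
have [p hpP Mjj] : exists2 p, p \in P 1 & M j j = p + c *: ev (w j) by exists (M j j - c *: ev (w j)); rewrite ?subrK.
have S : \sum_(t | t != j) M j t * M t j \in P 1.
  apply: memv_suml => t tj; apply: ideal_r => //; apply: (inP1 (i := w j) (j := w t)).
    by apply: hw; rewrite eq_sym.
  exact: hM.
have sq : M j j * M j j - (c * c) *: ev (w j) \in P 1.
  rewrite Mjj mulrDl !mulrDr -!scalerAl -!scalerAr evev scalerA !addrA addrK.
  apply: memvD; first apply: memvD.
  - by apply: ideal_r.
  - by apply: memvZ; apply: ideal_r.
  - by apply: memvZ; apply: ideal_l.
rewrite !mxE (bigD1 j) //= scalerBl zmod_id2.
by apply: memvB => //; apply: memvD.
Qed.

Section Cx.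
Variable ii : seq nat.
Hypothesis Hii : inXi n ii.
Local Notation m := (mXi ii).
Local Notation u := (@Xi_deg1 ii).
Local Notation v := (@Xi_deg0 ii).
Local Notation D := (Xi_diff n src tgt e a ii).

Lemma size_ii : size ii = (2 * m).+1.
Proof.
case/and5P: Hii => _ _ ho _ _; have := odd_double_half (size ii).
by rewrite ho /mXi -mul2n; lia.
Qed.

Lemma nth_lt i j : (i < j)%N -> (j < size ii)%N -> (nth 0 ii i < nth 0 ii j)%N.
Proof.
move=> ij js; case/and5P: Hii => so _ _ _ _.
by apply: (sorted_ltn_nth ltn_trans 0 so) => //; rewrite inE; lia.
Qed.

Lemma nth_bnd i : (i < size ii)%N -> (nth 0 ii i <= n.+1)%N.
Proof.
move=> hi; case/and5P: Hii => _ al _ _ _.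
by move/allP: al; apply; rewrite mem_nth.
Qed.

Lemma v_vtx (r : 'I_m) : vtx (v r).
Proof.
rewrite /Xi_deg0 /Defs.vtx; have hr := ltn_ord r; have sz := size_ii.
have h1 : (nth 0 ii (2 * r) < nth 0 ii (2 * r).+1)%N by apply: nth_lt; lia.
have h2 : (nth 0 ii (2 * r).+1 < nth 0 ii (2 * r).+2)%N by apply: nth_lt; lia.
have h3 : (nth 0 ii (2 * r).+2 <= n.+1)%N by apply: nth_bnd; lia.
lia.
Qed.

Lemma pos_ne i j : i != j -> (i < size ii)%N -> (j < size ii)%N -> nth 0 ii i != nth 0 ii j.
Proof.
move=> ij hi hj; case: (ltngtP i j) => h.
- by rewrite neq_ltn nth_lt.
- by rewrite neq_ltn (nth_lt h) ?orbT.
- by rewrite h eqxx in ij.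
Qed.

Lemma uv_ne (s : 'I_m.+1) (r : 'I_m) : u s != v r.
Proof.
have := ltn_ord s; have := ltn_ord r; have sz := size_ii => h1 h2.
apply: pos_ne; rewrite ?sz; try lia.
Qed.

Lemma uu_ne (s t : 'I_m.+1) : s != t -> u s != u t.
Proof.
have := ltn_ord s; have := ltn_ord t; have sz := size_ii => h1 h2 st.
apply: pos_ne; rewrite ?sz; try lia.
by apply/eqP => E; move/eqP: st; apply; apply: val_inj => /=; lia.
Qed.

Lemma vv_ne (s t : 'I_m) : s != t -> v s != v t.
Proof.
have := ltn_ord s; have := ltn_ord t; have sz := size_ii => h1 h2 st.
apply: pos_ne; rewrite ?sz; try lia.
by apply/eqP => E; move/eqP: st; apply; apply: val_inj => /=; lia.
Qed.

Lemma Dval (r : 'I_m) (j : 'I_m.+1) : D r j = if ((j : nat) == r) || ((j : nat) == r.+1) then fmap n src tgt e a (v r) (u j) else 0.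
Proof. by rewrite /Xi_diff mxE; case: (_ == r :> nat); case: (_ == r.+1 :> nat). Qed.

Lemma hom_D : hommx n e v u D.
Proof.
move=> r s; rewrite Dval; case: ifP => _; rewrite ?mulr0 ?mul0r //.
by rewrite /fmap !mulrA evev -(mulrA _ (ev (u s))) evev.
Qed.

Lemma link (F1 : 'M[A]_m.+1) (F0 : 'M[A]_m) (r : 'I_m) (s : 'I_m.+1) lam mu :
  chain_endo n e v u D F1 F0 -> ((s : nat) == r) || ((s : nat) == r.+1) -> vtx (u s) ->
  F1 s s - lam *: e (u s) \in P 1 -> F0 r r - mu *: e (v r) \in P 1 -> lam = mu.
Proof.
move=> [h1 h0 hc] hs va hl hm.
have vb := v_vtx r.
have hr := ltn_ord r; have hs' := ltn_ord s; have sz := size_ii.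
have ba : v r != u s by rewrite eq_sym uv_ne.
set Wb := W (v r) (u s).
have Ds : D r s = Wb by rewrite Dval hs fmapE.
have NL : Neg Wb ((D *m F1) r s - Wb * F1 s s).
  rewrite mxE (bigD1 s) //= Ds addrC addrK.
  apply: big_neg => j js; rewrite Dval; case: ifP => hj; last by rewrite mul0r; exact: Neg0.
  case vj: (vtx (u j)); last by rewrite fmapNr ?vj // mul0r; exact: Neg0.
  rewrite fmapE //; apply: negA => //.
  - have := ltn_ord j => hj'.
    case/orP: hj => /eqP hj; case/orP: hs => /eqP hs2.
    + by move: js; rewrite -(inj_eq val_inj) /= hj hs2 eqxx.
    + right; rewrite /Xi_deg0 /Xi_deg1; apply/andP; split; apply: nth_lt; lia.
    + left; rewrite /Xi_deg0 /Xi_deg1; apply/andP; split; apply: nth_lt; lia.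
    + by move: js; rewrite -(inj_eq val_inj) /= hj hs2 eqxx.
  - by have := h1 j s; rewrite !evE.
have NR : Neg Wb ((F0 *m D) r s - F0 r r * Wb).
  rewrite mxE (bigD1 r) //= Ds addrC addrK.
  apply: big_neg => i ir; rewrite Dval; case: ifP => hi; last by rewrite mulr0; exact: Neg0.
  rewrite fmapE ?v_vtx //; apply: negB => //; first exact: v_vtx.
  - have := ltn_ord i => hi'.
    case/orP: hi => /eqP hi; case/orP: hs => /eqP hs2.
    + by move: ir; rewrite -(inj_eq val_inj) /= => /eqP ?; exfalso; lia.
    + right; rewrite /Xi_deg0 /Xi_deg1; apply/andP; split; apply: nth_lt; lia.
    + left; rewrite /Xi_deg0 /Xi_deg1; apply/andP; split; apply: nth_lt; lia.
    + by move: ir; rewrite -(inj_eq val_inj) /= => /eqP ?; exfalso; lia.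
  - by have := h0 r i; rewrite !evE // v_vtx.
set p1 := F1 s s - lam *: e (u s).
set p0 := F0 r r - mu *: e (v r).
have E1 : Wb * F1 s s = Wb * p1 + lam *: Wb.
  by rewrite /p1 mulrBr -scalerAr /Wb w_endr // subrK.
have E0 : F0 r r * Wb = p0 * Wb + mu *: Wb.
  by rewrite /p0 mulrBl -scalerAl /Wb w_endl subrK.
have N1 : Neg Wb (Wb * p1) by exists p1.
have N0 : Neg Wb (p0 * Wb).
  have ep : e (v r) * p0 = p0.
    by rewrite /p0 mulrBr -scalerAr ee // -{1}(evE vb) (homL _ _ h0).
  rewrite -ep.
  exact: negQ.
have NN : Neg Wb ((lam - mu) *: Wb).
  rewrite scalerBl (zmod_id (Wb * p1) (p0 * Wb)) -E1 -E0.
  have -> : Wb * F1 s s - F0 r r * Wb = ((F0 *m D) r s - F0 r r * Wb) - ((D *m F1) r s - Wb * F1 s s).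
    by rewrite hc opprB [RHS]addrC addrA subrK.
  apply: NegD; last exact: N0.
  apply: NegD; last exact: NegN.
  by apply: NegD => //; exact: NegN.
case: NN => q [hq Eq]; apply/eqP; rewrite -subr_eq0; apply/eqP.
apply: (@nil_lem Wb (lam - mu) 0 q) => //.
- exact: w_P1.
- exact: Hc.
- exact: mem0v.
- by rewrite mul0r add0r.
Qed.

Lemma nh_diag (F1 : 'M[A]_m.+1) (F0 : 'M[A]_m) : null_homotopic n e v u D F1 F0 ->
  (forall s, F1 s s \in P 1) /\ (forall r, F0 r r \in P 1).
Proof.
move=> [H [hH -> ->]]; split.
- move=> s; rewrite mxE; apply: memv_suml => r _; apply: ideal_r => //.
  by apply: (inP1 (i := u s) (j := v r)); [exact: uv_ne | exact: hH].
- move=> r; rewrite mxE; apply: memv_suml => s _; apply: ideal_r => //.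
  by apply: (inP1 (i := v r) (j := u s)); [rewrite eq_sym; exact: uv_ne | exact: hom_D].
Qed.

Lemma size1 (T : Type) (x0 : T) (l : seq T) : size l = 1%N -> l = [:: nth x0 l 0].
Proof. by case: l => [|x [|y l]]. Qed.

Lemma u0_vtx (s : 'I_m.+1) : m = 0%N -> vtx (u s).
Proof.
move=> m0; have sz := size_ii; rewrite m0 in sz.
have E := size1 0%N sz; case/and5P: Hii => _ al _ n0 nn.
have s0 : (s : nat) = 0%N by have := ltn_ord s; lia.
rewrite /Xi_deg1 s0 /Defs.vtx.
have hb : (nth 0 ii 0 <= n.+1)%N by apply: nth_bnd; lia.
move: n0 nn; rewrite E => n0 nn.
have h1 : (nth 0 ii 0 != 0)%N by apply: contraNneq n0 => ->.
have h2 : (nth 0 ii 0 != n.+1)%N by apply: contraNneq nn => ->.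
by rewrite muln0 /=; move: h1 h2 hb; lia.
Qed.

Lemma u_vtx_mid (s : 'I_m.+1) : (0 < s < m)%N -> vtx (u s).
Proof.
move=> hs; rewrite /Xi_deg1 /Defs.vtx; have sz := size_ii.
have h1 : (nth 0 ii (2 * s).-1 < nth 0 ii (2 * s))%N by apply: nth_lt; lia.
have h2 : (nth 0 ii (2 * s) < nth 0 ii (2 * s).+1)%N by apply: nth_lt; lia.
have h3 : (nth 0 ii (2 * s).+1 <= n.+1)%N by apply: nth_bnd; lia.
lia.
Qed.

Lemma diag_ex q' (w : 'I_q' -> nat) (M : 'M[A]_q') j : hommx n e w w M -> vtx (w j) ->
  exists c, M j j - c *: e (w j) \in P 1.
Proof.
move=> hM vj; have [c hc] := diagP (M j j) vj; exists c.
by rewrite (hM j j) !evE.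
Qed.

Lemma scalar_ex (F1 : 'M[A]_m.+1) (F0 : 'M[A]_m) : chain_endo n e v u D F1 F0 ->
  exists lam, (forall s, F1 s s - lam *: ev (u s) \in P 1) /\ (forall r, F0 r r - lam *: ev (v r) \in P 1).
Proof.
move=> hce; have [h1 h0 hc] := hce.
have fake : forall (s : 'I_m.+1) lam, ~~ vtx (u s) -> F1 s s - lam *: ev (u s) \in P 1.
  move=> s lam ns; rewrite (h1 s s) !evN // !mulr0 scaler0 subr0 mem0v //.
case: (posnP m) => hm.
  have v0 : vtx (u ord0) by exact: u0_vtx.
  have [lam hl] := diag_ex (j := ord0) h1 v0.
  exists lam; split; last by move=> [t ht]; exfalso; lia.
  move=> s; have -> : s = ord0 by apply: val_inj => /=; have := ltn_ord s; lia.
  by rewrite evE.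
set r0 : 'I_m := Ordinal hm.
have [lam hl] := diag_ex (j := r0) h0 (v_vtx r0).
have claim : forall t (ht : (t < m)%N), F0 (Ordinal ht) (Ordinal ht) - lam *: e (v (Ordinal ht)) \in P 1.
  elim=> [|t IH] ht.
    by have -> : Ordinal ht = r0 by apply: val_inj.
  have ht' : (t < m)%N by lia.
  have hs : (t.+1 < m.+1)%N by lia.
  set s := Ordinal hs.
  have vs : vtx (u s) by apply: u_vtx_mid => /=; lia.
  have [lam' hl'] := diag_ex (j := s) h1 vs.
  have [mu hmu] := diag_ex (j := Ordinal ht) h0 (v_vtx _).
  have E1 : lam' = lam.
    apply: (link hce (r := Ordinal ht') (s := s)) => //=; first by rewrite eqxx orbT.
  have E2 : lam' = mu.
    by apply: (link hce (r := Ordinal ht) (s := s)) => //=; rewrite eqxx.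
  by rewrite -E1 E2.
have claim' : forall r : 'I_m, F0 r r - lam *: ev (v r) \in P 1.
  move=> [t ht]; rewrite evE; [exact: claim | exact: v_vtx].
exists lam; split => // s.
case vs: (vtx (u s)); last by apply: fake; rewrite vs.
have [lam' hl'] := diag_ex (j := s) h1 vs; rewrite evE //.
suff -> : lam = lam' by [].
case: (ltnP s m) => hsm.
  symmetry; apply: (link hce (r := Ordinal hsm) (s := s)) => //=; first by rewrite eqxx.
have hm1 : (m.-1 < m)%N by lia.
symmetry; apply: (link hce (r := Ordinal hm1) (s := s)) => //=.
  by apply/orP; right; apply/eqP; have := ltn_ord s; lia.
Qed.

Lemma zero_scalar (F1 : 'M[A]_m.+1) (F0 : 'M[A]_m) c :
  (forall s, F1 s s - c *: ev (u s) \in P 1) -> (forall r, F0 r r - c *: ev (v r) \in P 1) ->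
  (forall s, F1 s s \in P 1) -> (forall r, F0 r r \in P 1) -> c = 0.
Proof.
move=> h1 h0 z1 z0; case: (posnP m) => hm.
  have v0 : vtx (u ord0) by exact: u0_vtx.
  apply: (@scal_uniq (u ord0) (F1 ord0 ord0)) => //; first exact: e_ne0.
  - by rewrite -(evE v0).
  - by rewrite scale0r subr0.
set r0 : 'I_m := Ordinal hm.
have v0 := v_vtx r0.
apply: (@scal_uniq (v r0) (F0 r0 r0)) => //; first exact: e_ne0.
- by rewrite -(evE v0).
- by rewrite scale0r subr0.
Qed.

Lemma main_Cx : indecomposableK n e v u D.
Proof.
split; first exact: hom_D.
split.
  move=> hI; have [z1 z0] := nh_diag hI.
  have c0 : (1 : k) = 0.
    apply: (zero_scalar (F1 := idmx n e u) (F0 := idmx n e v)) => //.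
    - by move=> s; rewrite mxE eqxx scale1r subrr mem0v.
    - by move=> r; rewrite mxE eqxx scale1r subrr mem0v.
  by move/eqP: c0; rewrite oner_eq0.
move=> F1 F0 hce hid; have [h1 h0 hc] := hce.
have [lam [hs hr]] := scalar_ex hce.
have [z1 z0] := nh_diag hid.
have l2 : lam * lam - lam = 0.
  apply: (zero_scalar (F1 := F1 *m F1 - F1) (F0 := F0 *m F0 - F0)) => //.
  - by move=> s; apply: sq_diag => //; exact: uu_ne.
  - by move=> r; apply: sq_diag => //; exact: vv_ne.
have : lam * (lam - 1) = 0 by rewrite mulrBr mulr1.
move/eqP; rewrite mulf_eq0 subr_eq0 => /orP [/eqP l0 | /eqP l1].
  left; apply: nil_E => //.
  - move=> s t; case: (eqVneq s t) => [<-|st].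
      by have := hs s; rewrite l0 scale0r subr0.
    by apply: (inP1 (i := u s) (j := u t)); [exact: uu_ne | exact: h1].
  - move=> s t; case: (eqVneq s t) => [<-|st].
      by have := hr s; rewrite l0 scale0r subr0.
    by apply: (inP1 (i := v s) (j := v t)); [exact: vv_ne | exact: h0].
right.
have -> : F1 - idmx n e u = - (idmx n e u - F1) by rewrite opprB.
have -> : F0 - idmx n e v = - (idmx n e v - F0) by rewrite opprB.
apply: nh_opp; apply: nil_E.
- by apply: ce_add; [exact: ce_id hom_D | exact: ce_opp].
- move=> s t; rewrite !mxE; case: (eqVneq s t) => [<-|st].
    by have := hs s; rewrite l1 scale1r -memvN opprB.
  rewrite sub0r memvN.
  by apply: (inP1 (i := u s) (j := u t)); [exact: uu_ne | exact: h1].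
- move=> s t; rewrite !mxE; case: (eqVneq s t) => [<-|st].
    by have := hr s; rewrite l1 scale1r -memvN opprB.
  rewrite sub0r memvN.
  by apply: (inP1 (i := v s) (j := v t)); [exact: vv_ne | exact: h0].
- rewrite !mulmxBl !mulmxBr !(id_mull (hom_id _)) (id_mull h1) (id_mull h0) (id_mulr h1) (id_mulr h0).
  by rewrite !zmod_id3.
Qed.

End Cx.

End Alg.

Theorem lemma4p6 (k : closedFieldType) (A : falgType k) (n : nat) (Arr : finType)
  (src tgt : Arr -> nat) (e : nat -> A) (a : Arr -> A) :
  bound_quiver_algebra n src tgt e a ->
  condC n src tgt e a ->
  forall ii : seq nat, inXi n ii ->
  indecomposableK n e (@Xi_deg0 ii) (@Xi_deg1 ii) (Xi_diff n src tgt e a ii).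
Proof.
move=> [Hvtx Horth Hsum Harr [N [HN Hspan Hzero _]]] [Hadj Hcard Hb Hc] ii Hii.
exact: (main_Cx Hvtx Horth Hsum Harr HN Hspan Hzero Hb Hadj Hcard Hc Hii).
Qed.
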